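(* Fix $D,\alpha,\theta>0$. There is a constant $C=C(D,\alpha,\theta)$ such that for every finite connected graph $G$ on $n$ vertices satisfying (bal), (mix), (esc) with parameters $D,\alpha,\theta$, with $n$ sufficiently large, the following holds. Let $Y,Z$ be two independent lazy random walks of length $r-1$ started from two independent $\pi$-distributed vertices. Then, viewing $Y,Z$ as their vertex sets, $$\mathbb E\left[\mathrm{Close}_r(Y,Z)\right]\le C q^4,\qquad q=r/\sqrt n.$$
   Context: For a finite connected graph $G=(V,E)$ with $n$ vertices, $d(v)$ is the degree of $v$, $\delta(G),\Delta(G)$ are the minimum and maximum degrees. The lazy random walk $(X_t)$ on $G$ at each step stays put with probability $1/2$ and otherwise moves along a uniformly chosen edge incident to the current vertex; $\Pr_\mu$ denotes its law with $X_0\sim\mu$. Write $\mathbf p^t(u,v)=\Pr_u(X_t=v)$ and $\pi(v)=d(v)/(2|E|)$. The uniform mixing time is $t_{\mathrm{mix}}(G)=\min\{t\ge0:\max_{u,v\in V}|\mathbf p^t(u,v)/\pi(v)-1|\le 1/2\}$, and the bubble sum is $\mathcal B(G)=\sum_{t=0}^{t_{\mathrm{mix}}(G)}(t+1)\sup_{v}\mathbf p^t(v,v)$. Assumptions with parameters $D,\alpha,\theta>0$: (bal) $\Delta(G)/\delta(G)\le D$; (mix) $t_{\mathrm{mix}}(G)\le n^{1/2-\alpha}$; (esc) $\mathcal B(G)\le\theta$. The run time is $r=n^{1/2-\alpha/3}$ (rounded to an integer). For nonempty $U\subseteq V$, $\tau_U=\min\{t\ge 0:X_t\in U\}$. The $r$-closeness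 of two vertex sets is $\mathrm{Close}_r(U_1,U_2)=\Pr_\pi(\tau_{U_1}<r\text{ and }\tau_{U_2}<r)$, where the probability is over a lazy random walk $X$ with $X_0\sim\pi$ independent of $U_1,U_2$. *)

(* Defs.v *)
From Stdlib Require Import Reals Lra List Arith.
Import ListNotations.
Open Scope R_scope.

(* A finite multigraph on vertex set {0,...,n-1}, given by an edge-multiplicity
   function m : nat -> nat -> nat (only entries < n matter); symmetric, loopless. *)
Definition is_multigraph (n : nat) (m : nat -> nat -> nat) : Prop :=
  (forall u v, m u v = m v u) /\ (forall v, m v v = 0%nat).

Inductive reach (n : nat) (m : nat -> nat -> nat) (u : nat) : nat -> Prop :=
| reach_refl : reach n m u u
| reach_step : forall v w, reach n m u v -> (w < n)%nat -> (0 < m v w)%nat ->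
               reach n m u w.

Definition connected (n : nat) (m : nat -> nat -> nat) : Prop :=
  forall u v, (u < n)%nat -> (v < n)%nat -> reach n m u v.

Definition rsum (n : nat) (f : nat -> R) : R :=
  fold_right Rplus 0 (map f (seq 0 n)).

Definition deg (n : nat) (m : nat -> nat -> nat) (v : nat) : nat :=
  fold_right Nat.add 0%nat (map (m v) (seq 0 n)).

Definition maxdeg (n : nat) (m : nat -> nat -> nat) : nat :=
  fold_right Nat.max 0%nat (map (deg n m) (seq 0 n)).

Definition mindeg (n : nat) (m : nat -> nat -> nat) : nat :=
  fold_right Nat.min (deg n m 0) (map (deg n m) (seq 0 n)).

Definition totdeg (n : nat) (m : nat -> nat -> nat) : R :=
  rsum n (fun v => INR (deg n m v)).

Definition pi (n : nat) (m : nat -> nat -> nat) (v : nat) : R :=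
  INR (deg n m v) / totdeg n m.

Definition P (n : nat) (m : nat -> nat -> nat) (u v : nat) : R :=
  (if Nat.eqb u v then 1/2 else 0) + INR (m u v) / (2 * INR (deg n m u)).

Fixpoint pt (n : nat) (m : nat -> nat -> nat) (t : nat) (u v : nat) : R :=
  match t with
  | O => if Nat.eqb u v then 1 else 0
  | S t' => rsum n (fun w => pt n m t' u w * P n m w v)
  end.

Definition uniform_mixed (n : nat) (m : nat -> nat -> nat) (t : nat) : Prop :=
  forall u v, (u < n)%nat -> (v < n)%nat ->
    Rabs (pt n m t u v / pi n m v - 1) <= 1/2.

Definition is_tmix (n : nat) (m : nat -> nat -> nat) (t : nat) : Prop :=
  uniform_mixed n m t /\ (forall s, (s < t)%nat -> ~ uniform_mixed n m s).

Definition maxdiag (n : nat) (m : nat -> nat -> nat) (t : nat) : R :=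
  fold_right Rmax 0 (map (fun v => pt n m t v v) (seq 0 n)).

Definition bubble (n : nat) (m : nat -> nat -> nat) (tm : nat) : R :=
  rsum (S tm) (fun t => INR (S t) * maxdiag n m t).

(* Given the current last vertex and the reversed path so far, extend by k
   lazy-walk steps and integrate F against the resulting path. *)
Fixpoint ext_sum (n : nat) (m : nat -> nat -> nat) (k : nat) (last : nat)
    (acc : list nat) (F : list nat -> R) : R :=
  match k with
  | O => F (rev acc)
  | S k' => rsum n (fun v => P n m last v * ext_sum n m k' v (v :: acc) F)
  end.

(* E[F(X_0,...,X_{len-1})] for a lazy random walk X with X_0 ~ pi
   (a walk of length len-1, i.e. len time points). *)
Definition walk_exp (n : nat) (m : nat -> nat -> nat) (len : nat)
    (F : list nat -> R) : R :=
  rsum n (fun v => pi n m v * ext_sum n m (len - 1) v [v] F).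

Definition hits (x U : list nat) : bool :=
  existsb (fun v => existsb (Nat.eqb v) U) x.

Definition close_r (n : nat) (m : nat -> nat -> nat) (r : nat) (U1 U2 : list nat) : R :=
  walk_exp n m r (fun x => if andb (hits x U1) (hits x U2) then 1 else 0).

Definition expected_close (n : nat) (m : nat -> nat -> nat) (r : nat) : R :=
  walk_exp n m r (fun y => walk_exp n m r (fun z => close_r n m r y z)).

(* Main.v *)
Require Import Defs.
From Stdlib Require Import Reals.
From Stdlib Require Import Lra Lia List Arith.
Import ListNotations.
Open Scope R_scope.

Lemma fr_acc : forall l a, fold_right Rplus a l = fold_right Rplus 0 l + a.
Proof. induction l; intros; simpl. ring. rewrite IHl. ring. Qed.

Lemma fr_nat_acc : forall l a, fold_right Nat.add a l = (fold_right Nat.add 0 l + a)%nat.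
Proof. induction l; intros; simpl. lia. rewrite IHl. lia. Qed.

Lemma rsum_S : forall k f, rsum (S k) f = rsum k f + f k.
Proof. intros. unfold rsum. rewrite seq_S, map_app, fold_right_app. simpl.
  rewrite fr_acc. ring. Qed.

Lemma rsum_ext_lt : forall k f g, (forall v, (v<k)%nat -> f v = g v) -> rsum k f = rsum k g.
Proof. induction k; intros; [reflexivity|]. rewrite !rsum_S.
  rewrite (IHk f g) by (intros; apply H; lia). rewrite H by lia. reflexivity. Qed.

Lemma rsum_le : forall k f g, (forall v, (v<k)%nat -> f v <= g v) -> rsum k f <= rsum k g.
Proof. induction k; intros; [unfold rsum; simpl; lra|]. rewrite !rsum_S.
  apply Rplus_le_compat. apply IHk; intros; apply H; lia. apply H; lia. Qed.

Lemma rsum_nonneg : forall k f, (forall v, (v<k)%nat -> 0 <= f v) -> 0 <= rsum k f.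
Proof. induction k; intros; [unfold rsum; simpl; lra|]. rewrite !rsum_S.
  apply Rplus_le_le_0_compat. apply IHk; intros; apply H; lia. apply H; lia. Qed.

Lemma rsum_plus : forall k f g, rsum k (fun v => f v + g v) = rsum k f + rsum k g.
Proof. induction k; intros; [unfold rsum; simpl; ring|]. rewrite !rsum_S, IHk. ring. Qed.

Lemma rsum_scal_l : forall k c f, rsum k (fun v => c * f v) = c * rsum k f.
Proof. induction k; intros; [unfold rsum; simpl; ring|]. rewrite !rsum_S, IHk. ring. Qed.

Lemma rsum_scal_r : forall k c f, rsum k (fun v => f v * c) = rsum k f * c.
Proof. induction k; intros; [unfold rsum; simpl; ring|]. rewrite !rsum_S, IHk. ring. Qed.

Lemma rsum_const : forall k c, rsum k (fun _ => c) = INR k * c.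
Proof. induction k; intros; [unfold rsum; simpl; ring|]. rewrite !rsum_S, IHk, S_INR. ring. Qed.

Lemma rsum_le_const : forall k f c, (forall v, (v<k)%nat -> f v <= c) -> rsum k f <= INR k * c.
Proof. intros. rewrite <- rsum_const. apply rsum_le. auto. Qed.

Lemma rsum_swap : forall k j f,
  rsum k (fun a => rsum j (fun b => f a b)) = rsum j (fun b => rsum k (fun a => f a b)).
Proof. induction k; intros.
  - unfold rsum at 1; simpl. rewrite (rsum_ext_lt j _ (fun _ => 0)).
    rewrite rsum_const; ring. intros; reflexivity.
  - rewrite rsum_S, IHk. rewrite <- rsum_plus. apply rsum_ext_lt; intros.
    rewrite rsum_S. reflexivity. Qed.

Lemma rsum_delta : forall k u f, (u<k)%nat ->
  rsum k (fun v => if Nat.eqb v u then f v else 0) = f u.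
Proof. induction k; intros. lia. rewrite rsum_S.
  destruct (Nat.eq_dec u k).
  - subst. rewrite Nat.eqb_refl. rewrite (rsum_ext_lt k _ (fun _ => 0)).
    rewrite rsum_const; ring. intros. destruct (Nat.eqb_spec v k); [lia|reflexivity].
  - rewrite IHk by lia. destruct (Nat.eqb_spec k u); [lia|ring]. Qed.

Lemma rsum_ind_le1 : forall k u, rsum k (fun v => if Nat.eqb u v then 1 else 0) <= 1.
Proof. intros. destruct (Nat.lt_ge_cases u k).
  - rewrite (rsum_ext_lt k _ (fun v => if Nat.eqb v u then (fun _ => 1) v else 0)).
    rewrite rsum_delta; auto; lra. intros; rewrite Nat.eqb_sym; reflexivity.
  - rewrite (rsum_ext_lt k _ (fun _ => 0)). rewrite rsum_const; lra.
    intros. destruct (Nat.eqb_spec u v); [lia|reflexivity]. Qed.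

Lemma rsum_ind_nonneg : forall k u, 0 <= rsum k (fun v => if Nat.eqb u v then 1 else 0).
Proof. intros. apply rsum_nonneg. intros. destruct (Nat.eqb u v); lra. Qed.

Lemma rsum_ge_term : forall k f s, (s<k)%nat -> (forall v, (v<k)%nat -> 0 <= f v) -> f s <= rsum k f.
Proof. induction k; intros. lia. rewrite rsum_S. destruct (Nat.eq_dec s k).
  - subst. assert (0 <= rsum k f) by (apply rsum_nonneg; intros; apply H0; lia). lra.
  - assert (f s <= rsum k f) by (apply IHk; [lia| intros; apply H0; lia]).
    assert (0 <= f k) by (apply H0; lia). lra. Qed.

Lemma div_nonneg : forall a b, 0 <= a -> 0 <= b -> 0 <= a / b.
Proof. intros. unfold Rdiv. apply Rmult_le_pos; auto.
  destruct (Req_dec b 0) as [E|E]. rewrite E, Rinv_0. lra.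
  left. apply Rinv_0_lt_compat. lra. Qed.

Definition ind (a b : nat) : R := if Nat.eqb a b then 1 else 0.

Lemma ind_nonneg a b : 0 <= ind a b.
Proof. unfold ind; destruct (Nat.eqb a b); lra. Qed.

Section W.
Variable n : nat.
Variable m : nat -> nat -> nat.
Hypothesis Hsym : forall u v, m u v = m v u.
Hypothesis Hdeg : forall u, (u<n)%nat -> 0 < INR (deg n m u).
Hypothesis Hn : (1 <= n)%nat.

Lemma P_nonneg u v : 0 <= P n m u v.
Proof. unfold P. apply Rplus_le_le_0_compat. destruct (Nat.eqb u v); lra.
  apply div_nonneg. apply pos_INR. pose proof (pos_INR (deg n m u)). lra. Qed.

Lemma INR_deg u : INR (deg n m u) = rsum n (fun v => INR (m u v)).
Proof. unfold deg, rsum. generalize n. induction n0. reflexivity.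
  rewrite !seq_S, !map_app, !fold_right_app. simpl.
  rewrite fr_acc, fr_nat_acc, plus_INR, IHn0, Nat.add_0_r. ring. Qed.

Lemma row_sum u : (u<n)%nat -> rsum n (fun v => P n m u v) = 1.
Proof. intros Hu. unfold P. rewrite rsum_plus.
  rewrite (rsum_ext_lt n (fun v => if Nat.eqb u v then 1/2 else 0)
            (fun v => if Nat.eqb v u then (fun _ => 1/2) v else 0))
    by (intros; rewrite Nat.eqb_sym; reflexivity).
  rewrite rsum_delta by assumption.
  unfold Rdiv at 2. rewrite rsum_scal_r. rewrite <- INR_deg.
  pose proof (Hdeg u Hu). field. lra. Qed.

Definition T := totdeg n m.

Lemma T_pos : 0 < T.
Proof. unfold T, totdeg. eapply Rlt_le_trans. apply (Hdeg 0%nat); lia.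
  apply (rsum_ge_term n (fun v => INR (deg n m v))). lia. intros; apply pos_INR. Qed.

Lemma pi_nonneg v : 0 <= pi n m v.
Proof. unfold pi. apply div_nonneg; apply pos_INR || (left; apply T_pos). Qed.

Lemma pi_sum : rsum n (fun v => pi n m v) = 1.
Proof. unfold pi. unfold Rdiv. rewrite rsum_scal_r. pose proof T_pos. unfold T in H.
  unfold totdeg in *. field. lra. Qed.

Lemma stationary v : (v<n)%nat -> rsum n (fun u => pi n m u * P n m u v) = pi n m v.
Proof. intros Hv. pose proof T_pos as HT. unfold T in HT.
  rewrite (rsum_ext_lt n _ (fun u => (if Nat.eqb u v then (fun u => pi n m u * (1/2)) u else 0)
        + INR (m v u) * / (2 * totdeg n m))).
  - rewrite rsum_plus, rsum_delta, rsum_scal_r, <- INR_deg by assumption.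
    unfold pi. field. lra.
  - intros u Hu. pose proof (Hdeg u Hu). unfold P, pi. rewrite (Hsym u v).
    destruct (Nat.eqb u v); field; lra. Qed.

Lemma ext_mono : forall k last acc F G,
  (forall l, length l = k -> F (rev acc ++ l) <= G (rev acc ++ l)) ->
  ext_sum n m k last acc F <= ext_sum n m k last acc G.
Proof. induction k; intros; simpl.
  - specialize (H nil eq_refl). rewrite app_nil_r in H. exact H.
  - apply rsum_le. intros v _. apply Rmult_le_compat_l. apply P_nonneg.
    apply IHk. intros l Hl. simpl rev. rewrite <- app_assoc. simpl. apply H. simpl; lia.
Qed.

Lemma ext_const : forall k last acc F c, (last<n)%nat ->
  (forall l, length l = k -> F (rev acc ++ l) = c) -> ext_sum n m k last acc F = c.
Proof. induction k; simpl; intros.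
  - rewrite <- (app_nil_r (rev acc)). apply H0; reflexivity.
  - rewrite (rsum_ext_lt n _ (fun v => P n m last v * c)).
    + rewrite rsum_scal_r, row_sum; [ring|auto].
    + intros v Hv. rewrite (IHk v (v::acc) F c Hv); auto. intros l Hl. simpl rev.
      rewrite <- app_assoc; apply H0; simpl; lia.
Qed.

Lemma ext_rsum : forall k last acc N f,
  ext_sum n m k last acc (fun x => rsum N (fun s => f s x)) =
  rsum N (fun s => ext_sum n m k last acc (f s)).
Proof. induction k; simpl; intros. reflexivity.
  transitivity (rsum n (fun v => rsum N (fun s => P n m last v * ext_sum n m k v (v::acc) (f s)))).
  - apply rsum_ext_lt; intros. rewrite IHk. rewrite rsum_scal_l. reflexivity.
  - apply rsum_swap. Qed.

Lemma ext_nonneg : forall k last acc F, (forall l, 0 <= F l) -> 0 <= ext_sum n m k last acc F.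
Proof. induction k; simpl; intros. auto. apply rsum_nonneg; intros.
  apply Rmult_le_pos. apply P_nonneg. auto. Qed.

Fixpoint Eg (g : nat -> R) (j : nat) (u : nat) : R :=
  match j with
  | O => rsum n (fun v => P n m u v * g v)
  | S j' => rsum n (fun v => P n m u v * Eg g j' v)
  end.

Lemma ext_marg : forall k last acc g j, (j<k)%nat ->
  ext_sum n m k last acc (fun x => g (nth (length acc + j) x 0%nat)) = Eg g j last.
Proof. induction k; intros. lia. simpl ext_sum. destruct j as [|j].
  - simpl Eg. apply rsum_ext_lt. intros v Hv. f_equal. apply ext_const; auto.
    intros l _. simpl rev. rewrite <- app_assoc. simpl. rewrite Nat.add_0_r.
    rewrite app_nth2; rewrite length_rev; [rewrite Nat.sub_diag; reflexivity| lia].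
  - simpl Eg. apply rsum_ext_lt. intros v Hv. f_equal.
    replace (length acc + S j)%nat with (length (v::acc) + j)%nat by (simpl; lia).
    apply IHk. lia. Qed.

Lemma stat_step h : rsum n (fun u => pi n m u * rsum n (fun v => P n m u v * h v)) =
  rsum n (fun v => pi n m v * h v).
Proof. transitivity (rsum n (fun u => rsum n (fun v => pi n m u * P n m u v * h v))).
  - apply rsum_ext_lt; intros. rewrite <- rsum_scal_l. apply rsum_ext_lt; intros; ring.
  - rewrite rsum_swap. apply rsum_ext_lt; intros v Hv. rewrite rsum_scal_r.
    rewrite stationary; auto. Qed.

Lemma Eg_stat g j : rsum n (fun u => pi n m u * Eg g j u) = rsum n (fun v => pi n m v * g v).
Proof. induction j; simpl. apply stat_step. rewrite stat_step. exact IHj. Qed.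

Lemma walk_marg len g i : (i < len)%nat ->
  walk_exp n m len (fun y => g (nth i y 0%nat)) = rsum n (fun v => pi n m v * g v).
Proof. intros Hi. unfold walk_exp. destruct i.
  - apply rsum_ext_lt; intros v Hv. f_equal. apply ext_const; auto.
  - rewrite <- (Eg_stat g i). apply rsum_ext_lt; intros v Hv. f_equal.
    replace (S i) with (length [v] + i)%nat by reflexivity. apply ext_marg. lia. Qed.

Lemma walk_mono len F G : (1 <= len)%nat -> (forall l, length l = len -> F l <= G l) ->
  walk_exp n m len F <= walk_exp n m len G.
Proof. intros. unfold walk_exp. apply rsum_le; intros v Hv. apply Rmult_le_compat_l.
  apply pi_nonneg. apply ext_mono. intros l Hl. simpl. apply H0. simpl. lia. Qed.

Lemma walk_rsum len N f : walk_exp n m len (fun x => rsum N (fun s => f s x)) =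
  rsum N (fun s => walk_exp n m len (f s)).
Proof. unfold walk_exp.
  transitivity (rsum n (fun v => rsum N (fun s => pi n m v * ext_sum n m (len-1) v [v] (f s)))).
  - apply rsum_ext_lt; intros. rewrite ext_rsum, rsum_scal_l. reflexivity.
  - apply rsum_swap. Qed.

Lemma walk_one len : walk_exp n m len (fun _ => 1) = 1.
Proof. unfold walk_exp. rewrite (rsum_ext_lt n _ (fun v => pi n m v * 1)).
  transitivity (rsum n (fun v => pi n m v) * 1). apply rsum_scal_r. rewrite pi_sum; ring.
  intros. rewrite (ext_const _ _ _ _ 1); auto. Qed.

Lemma walk_nonneg len F : (forall l, 0 <= F l) -> 0 <= walk_exp n m len F.
Proof. intros. unfold walk_exp. apply rsum_nonneg; intros. apply Rmult_le_pos.
  apply pi_nonneg. apply ext_nonneg; auto. Qed.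

Lemma walk_rsum4 len N h :
  walk_exp n m len (fun x => rsum N (fun s => rsum N (fun i => rsum N (fun t => rsum N (fun j => h s i t j x))))) =
  rsum N (fun s => rsum N (fun i => rsum N (fun t => rsum N (fun j => walk_exp n m len (h s i t j))))).
Proof.
  etransitivity; [apply walk_rsum|]. apply rsum_ext_lt; intros s _.
  etransitivity; [apply walk_rsum|]. apply rsum_ext_lt; intros i _.
  etransitivity; [apply walk_rsum|]. apply rsum_ext_lt; intros t _.
  etransitivity; [apply walk_rsum|]. reflexivity. Qed.

Variable r : nat.
Hypothesis Hr : (1 <= r)%nat.
Variable p : R.
Hypothesis Hp : forall v, (v<n)%nat -> pi n m v <= p.

Definition A (x y : list nat) : R :=
  rsum r (fun s => rsum r (fun i => ind (nth s x 0%nat) (nth i y 0%nat))).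

Lemma A_nonneg x y : 0 <= A x y.
Proof. unfold A. apply rsum_nonneg; intros; apply rsum_nonneg; intros; apply ind_nonneg. Qed.

Lemma hits_A x y : length x = r -> length y = r -> hits x y = true -> 1 <= A x y.
Proof. intros Hx Hy H. unfold hits in H. apply existsb_exists in H.
  destruct H as [v [Hv H]]. apply existsb_exists in H. destruct H as [w [Hw E]].
  apply Nat.eqb_eq in E. subst w.
  apply In_nth with (d := 0%nat) in Hv. destruct Hv as [s [Hs Es]].
  apply In_nth with (d := 0%nat) in Hw. destruct Hw as [i [Hi Ei]].
  unfold A. eapply Rle_trans; [|apply (rsum_ge_term r _ s)].
  eapply Rle_trans; [|apply (rsum_ge_term r _ i)].
  - unfold ind. rewrite Es, Ei, Nat.eqb_refl. lra.
  - lia.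
  - intros; apply ind_nonneg.
  - lia.
  - intros; apply rsum_nonneg; intros; apply ind_nonneg. Qed.

Lemma ind_le x y z : length x = r -> length y = r -> length z = r ->
  (if andb (hits x y) (hits x z) then 1 else 0) <= A x y * A x z.
Proof. intros. pose proof (A_nonneg x y). pose proof (A_nonneg x z).
  destruct (hits x y) eqn:E1; destruct (hits x z) eqn:E2; simpl;
  try (apply Rmult_le_pos; auto).
  pose proof (hits_A x y H H0 E1). pose proof (hits_A x z H H1 E2). nra. Qed.

Definition f2 (s t a b : nat) : R :=
  walk_exp n m r (fun x => ind (nth s x 0%nat) a * ind (nth t x 0%nat) b).

Definition S4 (y z : list nat) : R :=
  rsum r (fun s => rsum r (fun i => rsum r (fun t => rsum r (fun j =>
     f2 s t (nth i y 0%nat) (nth j z 0%nat))))).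

Lemma AA_expand x y z : A x y * A x z =
  rsum r (fun s => rsum r (fun i => rsum r (fun t => rsum r (fun j =>
    ind (nth s x 0%nat) (nth i y 0%nat) * ind (nth t x 0%nat) (nth j z 0%nat))))).
Proof. unfold A. rewrite <- rsum_scal_r. apply rsum_ext_lt; intros s _.
  rewrite <- rsum_scal_r. apply rsum_ext_lt; intros i _.
  rewrite <- rsum_scal_l. apply rsum_ext_lt; intros t _.
  rewrite <- rsum_scal_l. reflexivity. Qed.

Lemma walk_ext len F G : (forall l, F l = G l) -> walk_exp n m len F = walk_exp n m len G.
Proof. intros. unfold walk_exp. apply rsum_ext_lt; intros. f_equal.
  f_equal. apply FunctionalExtensionality.functional_extensionality; auto. Qed.

Lemma close_le y z : length y = r -> length z = r -> close_r n m r y z <= S4 y z.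
Proof. intros Hy Hz. unfold close_r. eapply Rle_trans.
  apply (walk_mono r _ (fun x => A x y * A x z)). auto. intros; apply ind_le; auto.
  right. rewrite (walk_ext r _ _ (fun x => AA_expand x y z)).
  rewrite walk_rsum4. reflexivity. Qed.

Lemma Ez y : walk_exp n m r (fun z => S4 y z) =
  rsum r (fun s => rsum r (fun i => rsum r (fun t => rsum r (fun j =>
     rsum n (fun b => pi n m b * f2 s t (nth i y 0%nat) b))))).
Proof. unfold S4. rewrite walk_rsum4.
  apply rsum_ext_lt; intros s _. apply rsum_ext_lt; intros i _.
  apply rsum_ext_lt; intros t _. apply rsum_ext_lt; intros j Hj.
  apply (walk_marg r (fun b => f2 s t (nth i y 0%nat) b) j Hj). Qed.

Lemma f2_nonneg s t a b : 0 <= f2 s t a b.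
Proof. unfold f2. apply walk_nonneg. intros. apply Rmult_le_pos; apply ind_nonneg. Qed.

Lemma f2_sum s t : rsum n (fun a => rsum n (fun b => f2 s t a b)) <= 1.
Proof. unfold f2.
  rewrite (rsum_ext_lt n _ (fun a => walk_exp n m r (fun x => rsum n (fun b =>
       ind (nth s x 0%nat) a * ind (nth t x 0%nat) b)))).
  2:{ intros. symmetry. apply walk_rsum. }
  rewrite <- walk_rsum. rewrite <- (walk_one r). apply walk_mono; auto.
  intros l _. rewrite (rsum_ext_lt n _ (fun a => ind (nth s l 0%nat) a *
     rsum n (fun b => ind (nth t l 0%nat) b))).
  2:{ intros. rewrite rsum_scal_l. reflexivity. }
  rewrite rsum_scal_r. unfold ind.
  pose proof (rsum_ind_le1 n (nth s l 0%nat)). pose proof (rsum_ind_le1 n (nth t l 0%nat)).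
  pose proof (rsum_ind_nonneg n (nth s l 0%nat)). pose proof (rsum_ind_nonneg n (nth t l 0%nat)).
  nra. Qed.

Lemma p_nonneg : 0 <= p.
Proof. eapply Rle_trans. apply (pi_nonneg 0%nat). apply Hp. lia. Qed.

Lemma term_bound s t :
  rsum n (fun a => pi n m a * rsum n (fun b => pi n m b * f2 s t a b)) <= p * p.
Proof. pose proof p_nonneg.
  eapply Rle_trans. apply (rsum_le n _ (fun a => p * (p * rsum n (fun b => f2 s t a b)))).
  - intros a Ha. apply Rmult_le_compat. apply pi_nonneg.
    apply rsum_nonneg; intros; apply Rmult_le_pos; [apply pi_nonneg|apply f2_nonneg].
    auto. rewrite <- rsum_scal_l. apply rsum_le; intros b Hb.
    apply Rmult_le_compat_r. apply f2_nonneg. auto.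
  - rewrite rsum_scal_l, rsum_scal_l. pose proof (f2_sum s t).
    assert (0 <= p * p) by nra. nra. Qed.

Lemma main_bound : expected_close n m r <= INR r ^ 4 * p ^ 2.
Proof. unfold expected_close. eapply Rle_trans.
  - apply (walk_mono r _ (fun y => walk_exp n m r (fun z => S4 y z))). auto.
    intros y Hy. apply walk_mono. auto. intros z Hz. apply close_le; auto.
  - rewrite (walk_ext r _ _ Ez). rewrite walk_rsum4.
    eapply Rle_trans. apply (rsum_le_const r _ (INR r * (INR r * (INR r * (p*p))))).
    2:{ right; ring. }
    intros s _. apply rsum_le_const. intros i Hi. apply rsum_le_const. intros t _.
    apply rsum_le_const. intros j _.
    rewrite (walk_marg r (fun a => rsum n (fun b => pi n m b * f2 s t a b)) i Hi).
    apply term_bound. Qed.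

End W.

Lemma reach_lt n m u w : reach n m u w -> (u<n)%nat -> (w<n)%nat.
Proof. induction 1; auto. Qed.

Lemma reach_pred n m u w : reach n m u w -> (u<n)%nat -> u <> w ->
  exists v, (v<n)%nat /\ (0 < m v w)%nat.
Proof. intros H. destruct H; intros. congruence. exists v; split; auto.
  eapply reach_lt; eauto. Qed.

Lemma deg_pos n m : (2 <= n)%nat -> (forall u v, m u v = m v u) -> connected n m ->
  forall w, (w<n)%nat -> 0 < INR (deg n m w).
Proof. intros Hn Hs Hc w Hw.
  set (u := if Nat.eqb w 0 then 1%nat else 0%nat).
  assert (Hu : (u<n)%nat /\ u <> w) by (unfold u; destruct (Nat.eqb_spec w 0); lia).
  destruct Hu as [Hu Huw].
  destruct (reach_pred n m u w (Hc u w Hu Hw) Hu Huw) as [v [Hv Hm]].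
  rewrite INR_deg. eapply Rlt_le_trans; [|apply (rsum_ge_term n (fun x => INR (m w x)) v)].
  - rewrite Hs. apply lt_0_INR. exact Hm.
  - exact Hv.
  - intros; apply pos_INR. Qed.

Lemma fr_min_le : forall l a x, In x l -> (fold_right Nat.min a l <= x)%nat.
Proof. induction l; simpl; intros. contradiction.
  destruct H. subst; lia. specialize (IHl a0 x H). lia. Qed.

Lemma fr_min_prop : forall (Q : nat -> Prop) l a, Q a -> (forall x, In x l -> Q x) ->
  Q (fold_right Nat.min a l).
Proof. induction l; simpl; intros; auto.
  destruct (Nat.min_spec a (fold_right Nat.min a0 l)) as [[_ E]|[_ E]]; rewrite E; auto. Qed.

Lemma fr_max_ge : forall l a x, In x l -> (x <= fold_right Nat.max a l)%nat.
Proof. induction l; simpl; intros. contradiction.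
  destruct H. subst; lia. specialize (IHl a0 x H). lia. Qed.

Theorem mainTheorem8 :
  forall (D alpha theta : R), 0 < D -> 0 < alpha -> 0 < theta ->
  exists (C : R) (N : nat),
  forall (n : nat) (m : nat -> nat -> nat) (r : nat),
    (N <= n)%nat ->
    is_multigraph n m ->
    connected n m ->
    (* (bal) *)
    INR (maxdeg n m) / INR (mindeg n m) <= D ->
    (* (mix) and (esc) *)
    (exists tm, is_tmix n m tm /\
                INR tm <= Rpower (INR n) (1/2 - alpha) /\
                bubble n m tm <= theta) ->
    (* r = n^(1/2 - alpha/3) rounded (down) to an integer *)
    INR r <= Rpower (INR n) (1/2 - alpha/3) < INR r + 1 ->
    expected_close n m r <= C * (INR r / sqrt (INR n)) ^ 4.
Proof.
  intros D alpha theta HD Ha Ht. exists (D^2), 2%nat.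
  intros n m r Hn [Hsym Hloop] Hc Hbal [tm [[Hmix _] [Htm _]]] Hr.
  assert (Hdeg := deg_pos n m Hn Hsym Hc).
  assert (Hn1 : (1 <= n)%nat) by lia.
  assert (HnR : 1 < INR n) by (apply (lt_INR 1); lia).
  assert (Hr1 : (1 <= r)%nat).
  { destruct (Rle_lt_dec 0 (1/2 - alpha/3)) as [He|He].
    - assert (1 <= Rpower (INR n) (1/2 - alpha/3)).
      { apply Rle_trans with (Rpower (INR n) 0); [rewrite Rpower_O; lra| apply Rle_Rpower; lra]. }
      destruct r. simpl in Hr. lra. lia.
    - exfalso. assert (Rpower (INR n) (1/2 - alpha) < 1).
      { apply Rlt_le_trans with (Rpower (INR n) 0); [apply Rpower_lt; lra| rewrite Rpower_O; lra]. }
      destruct tm.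
      + specialize (Hmix 0%nat 1%nat ltac:(lia) ltac:(lia)). simpl in Hmix.
        replace (0 / pi n m 1 - 1) with (-1) in Hmix by (unfold Rdiv; ring).
        rewrite Rabs_left in Hmix; lra.
      + rewrite S_INR in Htm. pose proof (pos_INR tm). lra. }
  set (mi := INR (mindeg n m)). set (M := INR (maxdeg n m)).
  assert (Hmi : 1 <= mi).
  { unfold mi, mindeg. apply (le_INR 1).
    apply (fr_min_prop (fun x => (1 <= x)%nat)).
    - pose proof (Hdeg 0%nat ltac:(lia)). destruct (deg n m 0); simpl in *; lra || lia.
    - intros x Hx. apply in_map_iff in Hx. destruct Hx as [v [<- Hv]].
      apply in_seq in Hv. pose proof (Hdeg v ltac:(lia)).
      destruct (deg n m v); simpl in *; lra || lia. }
  assert (HM : M <= D * mi).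
  { replace M with ((M / mi) * mi) by (field; lra). apply Rmult_le_compat_r. lra. exact Hbal. }
  assert (HT : INR n * mi <= totdeg n m).
  { unfold totdeg. rewrite <- rsum_const. apply rsum_le. intros v Hv.
    unfold mi, mindeg. apply le_INR. apply fr_min_le. apply in_map. apply in_seq. lia. }
  assert (Hp : forall v, (v<n)%nat -> pi n m v <= D / INR n).
  { intros v Hv. assert (Hd : INR (deg n m v) <= M).
    { unfold M, maxdeg. apply le_INR. apply fr_max_ge. apply in_map. apply in_seq. lia. }
    pose proof (pos_INR (deg n m v)).
    assert (H2 : INR (deg n m v) * INR n <= D * totdeg n m) by nra.
    assert (0 < totdeg n m) by nra.
    unfold pi.
    replace (INR (deg n m v) / totdeg n m) with ((INR (deg n m v) * INR n) * / (totdeg n m * INR n)) by (field; lra).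
    replace (D / INR n) with ((D * totdeg n m) * / (totdeg n m * INR n)) by (field; lra).
    apply Rmult_le_compat_r; [left; apply Rinv_0_lt_compat; nra | exact H2]. }
  eapply Rle_trans. apply (main_bound n m Hsym Hdeg Hn1 r Hr1 (D / INR n) Hp).
  right. assert (Hs : sqrt (INR n) * sqrt (INR n) = INR n) by (apply sqrt_sqrt; lra).
  assert (0 < sqrt (INR n)) by (apply sqrt_lt_R0; lra).
  set (s := sqrt (INR n)) in *. rewrite <- Hs. field. lra.
Qed.
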